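(* Let $\mathcal D$ be a distribution of $(x,y)\in\mathbb R^d\times\{-1,+1\}$ with $x$ having finite second moments, let $\lambda>0$, and let $w^*$ be a minimizer of $\mathcal L(w)=\mathbb E_{(x,y)\sim\mathcal D}[\max(0,1-yw^\top x)]+\frac{\lambda}{2}\|w\|_2^2$. Suppose the coordinates of $x$ are mutually independent conditionally on $y$. If a coordinate $i$ satisfies $\mathbb E[x_i\mid y=-1]=0=\mathbb E[x_i\mid y=1]$, then $w_i^*=0$. *)

(* Defs.v *)
From HB Require Import structures.
From mathcomp Require Import all_boot all_order all_algebra.
From mathcomp Require Import all_classical all_reals all_analysis.
Set Implicit Arguments. Unset Strict Implicit. Unset Printing Implicit Defensive.
Import Order.TTheory GRing.Theory Num.Theory.
Local Open Scope classical_set_scope.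
Local Open Scope ring_scope.

Section Defs.
Context (d0 : measure_display) (T : measurableType d0) (R : realType).
Context (P : probability T R).

Definition hinge {d : nat} (w : 'rV[R]_d) (x : 'rV[R]_d) (y : R) : R :=
  Num.max 0 (1 - y * \sum_(i < d) w 0 i * x 0 i).

Definition svm_loss {d : nat} (X : T -> 'rV[R]_d) (Y : T -> R) (lam : R)
  (w : 'rV[R]_d) : \bar R :=
  ((\int[P]_om (hinge w (X om) (Y om))%:E) +
   (lam / 2 * \sum_(i < d) w 0 i ^+ 2)%:E)%E.

(* P(A | Y = c), using the convention x / 0 = 0 *)
Definition condP (Y : T -> R) (c : R) (A : set T) : R :=
  fine (P (A `&` Y @^-1` [set c])) / fine (P (Y @^-1` [set c])).

(* E[Z | Y = c] = E[Z 1_{Y=c}] / P(Y = c), with the convention x / 0 = 0 *)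
Definition condE (Y : T -> R) (c : R) (Z : T -> R) : R :=
  fine (\int[P]_(om in Y @^-1` [set c]) (Z om)%:E) / fine (P (Y @^-1` [set c])).

Definition cond_indep_coords {d : nat} (X : T -> 'rV[R]_d) (Y : T -> R) (c : R) : Prop :=
  (0 < fine (P (Y @^-1` [set c])))%R ->
  forall B : 'I_d -> set R, (forall j, measurable (B j)) ->
    condP Y c [set om | forall j, B j (X om 0 j)] =
    \prod_(j < d) condP Y c [set om | B j (X om 0 j)].
End Defs.

(* Main.v *)
Require Import Defs.
From HB Require Import structures.
From mathcomp Require Import all_boot all_order all_algebra.
From mathcomp Require Import all_classical all_reals all_analysis.
From mathcomp Require Import ring lra.
From mathcomp Require Import measurable_realfun simple_functions measurable_fun_approximation.
Set Implicit Arguments. Unset Strict Implicit. Unset Printing Implicit Defensive.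
Import Order.TTheory GRing.Theory Num.Theory.
Import numFieldNormedType.Exports.
Local Open Scope classical_set_scope.
Local Open Scope ring_scope.

Import HBNNSimple.

Lemma int_nnsfun_comp d (T : measurableType d) (R : realType)
  (P : {measure set T -> \bar R}) (Z : T -> R) (mZ : measurable_fun setT Z)
  (E : set T) (mE : measurable E) (h : {nnsfun R >-> R}) :
  (\int[P]_(x in E) (h (Z x))%:E =
   \sum_(y \in range h) y%:E * P (E `&` Z @^-1` (h @^-1` [set y])))%E.
Proof.
under eq_integral do rewrite fimfunE -fsumEFin//.
rewrite ge0_integral_fsum//; last 2 first.
- move=> r; apply/measurable_EFinP; apply: measurable_funM => //.
  apply: (measurable_funS measurableT) => //.
  apply: measurableT_comp => //; exact: measurable_indic.
- by move=> n x _; rewrite EFinM nnfun_muleindic_ge0.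
apply: eq_fsbigr => y _.
have -> : (fun x => (y * \1_(h @^-1` [set y]) (Z x))%:E) =
   (fun x => (y * \1_((fun k => Z @^-1` (h @^-1` [set k])) y) x)%:E) by [].
have mS : measurable (Z @^-1` (h @^-1` [set y])).
  by rewrite -[X in measurable X]setTI; apply: mZ.
rewrite (integralZl_indic mE (fun k => Z @^-1` (h @^-1` [set k]))) //.
- by rewrite integral_indic // setIC.
- by move=> y0; rewrite preimage_nnfun0// preimage_set0.
Qed.

Import HBNNSimple.

Lemma transfer d (T : measurableType d) (R : realType)
  (P : {measure set T -> \bar R}) (Z : T -> R) (mZ : measurable_fun setT Z)
  (E1 E2 : set T) (mE1 : measurable E1) (mE2 : measurable E2) (a b : R)
  (a0 : 0 <= a) (b0 : 0 <= b)
  (H : forall B, measurable B ->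
     (a%:E * P (E1 `&` Z @^-1` B) = b%:E * P (E2 `&` Z @^-1` B))%E)
  (phi : R -> R) (mphi : measurable_fun setT phi) (phi0 : forall x, 0 <= phi x) :
  (a%:E * \int[P]_(x in E1) (phi (Z x))%:E =
   b%:E * \int[P]_(x in E2) (phi (Z x))%:E)%E.
Proof.
have mf : measurable_fun setT (EFin \o phi) by exact/measurable_EFinP.
pose f_ := nnsfun_approx measurableT mf.
have simple (h : {nnsfun R >-> R}) :
    (a%:E * \int[P]_(x in E1) (h (Z x))%:E =
     b%:E * \int[P]_(x in E2) (h (Z x))%:E)%E.
  rewrite (int_nnsfun_comp _ mZ mE1) (int_nnsfun_comp _ mZ mE2).
  have g0 E y : measurable E -> (0 <= y%:E * P (E `&` Z @^-1` (h @^-1` [set y])))%E.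
    move=> mE; case: (leP 0 y) => y0; first by rewrite mule_ge0.
    by rewrite preimage_nnfun0// preimage_set0 setI0 measure0 mule0.
  rewrite (ge0_mule_fsumr _ _ (fun y => g0 E1 y mE1)) (ge0_mule_fsumr _ _ (fun y => g0 E2 y mE2)).
  apply: eq_fsbigr => y _. rewrite muleCA (H (h @^-1` [set y])); first by rewrite muleCA.
  exact: measurable_sfunP.
have mono E (mE : measurable E) :
    (\int[P]_(x in E) (phi (Z x))%:E =
     limn (fun n => \int[P]_(x in E) (f_ n (Z x))%:E))%E.
  rewrite -monotone_convergence//=.
  - apply: eq_integral => x _; apply/esym/cvg_lim => //=.
    exact: (@cvg_nnsfun_approx _ _ _ _ measurableT _ mf (fun x _ => phi0 x) (Z x)).
  - move=> n; apply/measurable_EFinP; apply: measurableT_comp => //.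
    exact: measurable_funTS.
  - by move=> n x _; rewrite lee_fin.
  - by move=> x _ m n mn; rewrite lee_fin; exact/lefP/nd_nnsfun_approx.
have cv E (mE : measurable E) :
    cvgn (fun n => \int[P]_(x in E) (f_ n (Z x))%:E)%E.
  apply/ereal_nondecreasing_is_cvgn => m n mn; apply: ge0_le_integral => //.
  - by move=> x _; rewrite lee_fin.
  - apply/measurable_EFinP; apply: measurableT_comp => //; exact: measurable_funTS.
  - apply/measurable_EFinP; apply: measurableT_comp => //; exact: measurable_funTS.
  - by move=> x _; rewrite lee_fin; exact/lefP/nd_nnsfun_approx.
rewrite (mono _ mE1) (mono _ mE2) -!limeMl//; last exact: cv.
  by congr (limn _); apply/funext => n; exact: simple.
exact: cv.
Qed.

Lemma pfD d (T : measurableType d) (R : realType) (P : probability T R)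
  (U V : set T) : measurable U -> measurable V -> V `<=` U ->
  fine (P (U `\` V)) = fine (P U) - fine (P V).
Proof.
move=> mU mV VU; rewrite measureD//; last first.
  by rewrite (le_lt_trans (probability_le1 P mU))// ltry.
rewrite setIidr// fineB// fin_num_measure//.
Qed.

Lemma pf_cvg d (T : measurableType d) (R : realType) (P : probability T R)
  (F : (set T)^nat) (W : set T) : (forall n, measurable (F n)) ->
  nondecreasing_seq F -> measurable W ->
  (fun n => fine (P (F n `&` W))) @ \oo --> fine (P ((\bigcup_n F n) `&` W)).
Proof.
move=> mF ndF mW; apply: fine_cvg; rewrite fineK; last first.
  by apply: fin_num_measure; apply: measurableI => //; exact: bigcup_measurable.
rewrite setI_bigcupl; apply: (nondecreasing_cvg_mu (mu := P)).
- by move=> n; exact: measurableI.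
- by apply: bigcup_measurable => n _; exact: measurableI.
- by move=> m n mn; apply/subsetPset; apply: setSI; exact/subsetPset/ndF.
Qed.

Definition rectG d (T : measurableType d) (R : realType) (dd : nat)
  (X : T -> 'rV[R]_dd) (i : 'I_dd) : set (set T) :=
  [set A | exists B : 'I_dd -> set R, (forall j, measurable (B j)) /\
     B i = setT /\ A = [set om | forall j, B j (X om 0 j)]].

Lemma rect_meas d (T : measurableType d) (R : realType) (dd : nat)
  (X : T -> 'rV[R]_dd) (mX : forall j, measurable_fun setT (fun om => X om 0 j))
  (B : 'I_dd -> set R) : (forall j, measurable (B j)) ->
  measurable [set om | forall j, B j (X om 0 j)].
Proof.
move=> mB.
have -> : [set om | forall j, B j (X om 0 j)] =
    \bigcap_(j in [set: 'I_dd]) ((fun om => X om 0 j) @^-1` B j).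
  by apply/seteqP; split => om /= H j; [move=> _; exact: H|exact: H].
apply: fin_bigcap_measurable => // j _.
by rewrite -[X in measurable X]setTI; apply: mX.
Qed.

Lemma rect_prop d (T : measurableType d) (R : realType) (P : probability T R)
  (dd : nat) (X : T -> 'rV[R]_dd) (Y : T -> R) (c : R) (i : 'I_dd)
  (ind : cond_indep_coords P X Y c)
  (apos : 0 < fine (P (Y @^-1` [set c])))
  (B : 'I_dd -> set R) (mB : forall j, measurable (B j)) (Bi : B i = setT)
  (S : set R) (mS : measurable S) :
  fine (P (([set om | forall j, B j (X om 0 j)] `&` [set om | S (X om 0 i)])
          `&` Y @^-1` [set c])) * fine (P (Y @^-1` [set c])) =
  fine (P ([set om | forall j, B j (X om 0 j)] `&` Y @^-1` [set c])) *
  fine (P ([set om | S (X om 0 i)] `&` Y @^-1` [set c])).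
Proof.
pose B' := fun j => if j == i then S else B j.
have mB' j : measurable (B' j) by rewrite /B'; case: ifP.
have h1 := ind apos B' mB'.
have h2 := ind apos B mB.
rewrite (bigD1 i) //= in h1; rewrite (bigD1 i) //= in h2.
have E1 : [set om | forall j, B' j (X om 0 j)] =
    [set om | forall j, B j (X om 0 j)] `&` [set om | S (X om 0 i)].
  apply/seteqP; split => om /=.
  - move=> H; split; last by have := H i; rewrite /B' eqxx.
    move=> j; case: (eqVneq j i) => [->|ji]; first by rewrite Bi.
    by have := H j; rewrite /B' (negbTE ji).
  - move=> [H1 H2] j; rewrite /B'; case: (eqVneq j i) => [->//|ji].
    exact: H1.
rewrite E1 in h1; move: h1; rewrite /B' eqxx; under eq_bigr => j ji do rewrite (negbTE ji).
move=> h1.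
have E2 : [set om | B i (X om 0 i)] = setT by rewrite Bi.
rewrite E2 in h2.
move: h1 h2; rewrite /condP setTI.
set Pi := \prod_(j < dd | j != i) _.
set al := fine (P (Y @^-1` [set c])).
move=> h1 h2.
have a0 : al != 0 by rewrite gt_eqF.
rewrite divff // mul1r in h2.
have e1 : forall x y, x / al = y -> x = y * al by move=> x y <-; rewrite divfK.
rewrite (e1 _ _ h1) (e1 _ _ h2); field; exact: a0.
Qed.

Lemma indep_extend d (T : measurableType d) (R : realType) (P : probability T R)
  (dd : nat) (X : T -> 'rV[R]_dd) (Y : T -> R)
  (mX : forall j, measurable_fun setT (fun om => X om 0 j))
  (mY : measurable_fun setT Y) (c : R) (i : 'I_dd)
  (ind : cond_indep_coords P X Y c)
  (apos : 0 < fine (P (Y @^-1` [set c]))) :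
  forall A, <<s rectG X i >> A ->
  measurable A /\
  forall S, measurable S ->
  fine (P ((A `&` [set om | S (X om 0 i)]) `&` Y @^-1` [set c])) *
    fine (P (Y @^-1` [set c])) =
  fine (P (A `&` Y @^-1` [set c])) *
    fine (P ([set om | S (X om 0 i)] `&` Y @^-1` [set c])).
Proof.
have mYc : measurable (Y @^-1` [set c]).
  by rewrite -[X in measurable X]setTI; apply: mY.
have mXS S : measurable S -> measurable [set om | S (X om 0 i)].
  by move=> mS; rewrite -[X in measurable X]setTI; apply: (mX i).
apply: lambda_system_subset => //.
- move=> A B [BA [mA [HA ->]]] [BB [mB [HB ->]]].
  exists (fun j => BA j `&` BB j); split.
    by move=> j; exact: measurableI.
  split; first by rewrite HA HB setIid.
  by apply/seteqP; split => om /=; [move=> [h1 h2] j; split|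
     move=> h; split => j; have [] := h j].
- split => //.
  + split => //.
    by move=> S mS; rewrite !setTI mulrC.
  + move=> A B BA [mA HA] [mB HB]; split; first exact: measurableD.
    move=> S mS.
    have e1 : (A `\` B) `&` [set om | S (X om 0 i)] `&` Y @^-1` [set c] =
      (A `&` [set om | S (X om 0 i)] `&` Y @^-1` [set c]) `\`
      (B `&` [set om | S (X om 0 i)] `&` Y @^-1` [set c]).
      apply/seteqP; split => om /=.
      * by move=> [[[Ao nBo] So] Yo]; split => // -[[]].
      * by move=> [[[Ao So] Yo] H]; split => //; split => //; split => // Bo; apply: H.
    have e2 : (A `\` B) `&` Y @^-1` [set c] =
      (A `&` Y @^-1` [set c]) `\` (B `&` Y @^-1` [set c]).
      apply/seteqP; split => om /=.
      * by move=> [[Ao nBo] Yo]; split => // -[].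
      * by move=> [[Ao Yo] H]; split => //; split => // Bo; apply: H.
    rewrite e1 e2 !pfD; first last.
    - by apply: setSI; apply: setSI.
    - by do 2 apply: measurableI => //; exact: mXS.
    - by do 2 apply: measurableI => //; exact: mXS.
    - by apply: setSI.
    - exact: measurableI.
    - exact: measurableI.
    by rewrite !mulrBl HA // HB.
  + move=> F ndF HF; split.
      by apply: bigcup_measurable => n _; case: (HF n).
    move=> S mS.
    have mF n : measurable (F n) by case: (HF n).
    have c1 := pf_cvg (P:=P) mF ndF (measurableI _ _ (mXS _ mS) mYc).
    have c2 := pf_cvg (P:=P) mF ndF mYc.
    have E : (fun n => fine (P (F n `&` ([set om | S (X om 0 i)] `&` Y @^-1` [set c]))) *
                  fine (P (Y @^-1` [set c]))) =
             (fun n => fine (P (F n `&` Y @^-1` [set c])) *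
                  fine (P ([set om | S (X om 0 i)] `&` Y @^-1` [set c]))).
      by apply/funext => n; rewrite setIA; case: (HF n) => _ ->.
    have l1 := cvg_lim (@Rhausdorff R) (cvgMr_tmp (b := fine (P (Y @^-1` [set c]))) c1).
    have l2 := cvg_lim (@Rhausdorff R)
      (cvgMr_tmp (b := fine (P ([set om | S (X om 0 i)] `&` Y @^-1` [set c]))) c2).
    by rewrite -setIA -l1 -l2 E.
- move=> A [B [mB [Bi ->]]]; split; first exact: rect_meas.
  by move=> S mS; exact: rect_prop.
Qed.

Lemma halfspace_sG d (T : measurableType d) (R : realType) (dd : nat)
  (X : T -> 'rV[R]_dd) (i : 'I_dd) (w : 'rV[R]_dd) (c : R) :
  w 0 i = 0 ->
  <<s rectG X i >> [set om | 0 < 1 - c * \sum_(j < dd) w 0 j * X om 0 j].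
Proof.
move=> wi.
pose TG := g_sigma_algebraType (rectG X i).
have mXj j : j != i -> measurable_fun (setT : set TG) (fun om : TG => X om 0 j).
  move=> ji _ U mU.
  apply: sub_sigma_algebra.
  exists (fun k => if k == j then U else setT); split.
    by move=> k; case: ifP.
  split; first by rewrite eq_sym (negbTE ji).
  apply/seteqP; split => om /=.
  - by move=> [_ h] k; case: ifP => // /eqP ->.
  - by move=> h; split => //; have := h j; rewrite eqxx.
have mterm j : measurable_fun (setT : set TG) (fun om : TG => w 0 j * X om 0 j).
  case: (eqVneq j i) => [->|ji].
    rewrite wi; under eq_fun do rewrite mul0r; exact: measurable_cst.
  apply: measurable_funM => //; exact: mXj.
have ms : measurable_fun (setT : set TG)
    (fun om : TG => \sum_(j < dd) w 0 j * X om 0 j).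
  by apply: measurable_sum => j; exact: mterm.
have mh : measurable_fun (setT : set TG)
    (fun om : TG => 1 - c * \sum_(j < dd) w 0 j * X om 0 j).
  apply: measurable_funB => //; apply: measurable_funM => //.
have := mh measurableT _ (measurable_itv `]0, +oo[).
rewrite setTI.
have -> : (fun om : TG => 1 - c * \sum_(j < dd) w 0 j * X om 0 j) @^-1` `]0, +oo[ =
   [set om | 0 < 1 - c * \sum_(j < dd) w 0 j * X om 0 j].
  by apply/seteqP; split => om /=; rewrite in_itv /= andbT.
by [].
Qed.

Lemma sG_meas d (T : measurableType d) (R : realType) (dd : nat)
  (X : T -> 'rV[R]_dd) (mX : forall j, measurable_fun setT (fun om => X om 0 j))
  (i : 'I_dd) (A : set T) : <<s rectG X i >> A -> measurable A.
Proof.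
apply: smallest_sub; first exact: sigma_algebra_measurable.
by move=> B [Bf [mB [_ ->]]]; exact: rect_meas.
Qed.

Lemma key_integral d (T : measurableType d) (R : realType) (P : probability T R)
  (dd : nat) (X : T -> 'rV[R]_dd) (Y : T -> R)
  (mX : forall j, measurable_fun setT (fun om => X om 0 j))
  (mY : measurable_fun setT Y) (c : R) (i : 'I_dd)
  (ind : cond_indep_coords P X Y c)
  (intX : P.-integrable setT (fun om => (X om 0%R i)%:E))
  (h0 : condE P Y c (fun om => X om 0%R i) = 0)
  (A : set T) (hA : <<s rectG X i >> A) :
  (\int[P]_(om in A `&` Y @^-1` [set c]) (X om 0%R i)%:E = 0)%E.
Proof.
have mYc : measurable (Y @^-1` [set c]).
  by rewrite -[X in measurable X]setTI; apply: mY.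
have mA : measurable A := sG_meas mX hA.
have mE1 : measurable (A `&` Y @^-1` [set c]) by exact: measurableI.
have mXE E : measurable_fun E (fun om => (X om 0%R i)%:E).
  by apply/measurable_EFinP; exact: measurable_funTS.
set al := fine (P (Y @^-1` [set c])).
have al0 : 0 <= al by apply: fine_ge0; exact: measure_ge0.
have [al_eq0|al_gt0] : al = 0 \/ 0 < al.
  by move: al0; rewrite le_eqVlt => /orP[/eqP <-|->]; [left|right].
  have PYc0 : P (Y @^-1` [set c]) = 0%E.
    by rewrite -(fineK (fin_num_measure P _ mYc)) -/al al_eq0.
  have PE0 : P (A `&` Y @^-1` [set c]) = 0%E.
    apply/eqP; rewrite eq_le measure_ge0 andbT -PYc0.
    by apply: le_measure; rewrite ?inE //; exact: subIsetr.
  exact: null_set_integral.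
have [_ cl] := indep_extend mX mY ind al_gt0 hA.
set b := fine (P (A `&` Y @^-1` [set c])).
have b0 : 0 <= b by apply: fine_ge0; exact: measure_ge0.
have H : forall B, measurable B ->
    (al%:E * P ((A `&` Y @^-1` [set c]) `&` (fun om => X om 0%R i) @^-1` B) =
     b%:E * P (Y @^-1` [set c] `&` (fun om => X om 0%R i) @^-1` B))%E.
  move=> B mB; have := cl B mB.
  have mXB : measurable [set om | B (X om 0%R i)].
    by rewrite -[X in measurable X]setTI; apply: (mX i).
  have e1 : (A `&` Y @^-1` [set c]) `&` (fun om => X om 0%R i) @^-1` B =
     (A `&` [set om | B (X om 0%R i)]) `&` Y @^-1` [set c] by rewrite setIAC.
  have e2 : Y @^-1` [set c] `&` (fun om => X om 0%R i) @^-1` B =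
     [set om | B (X om 0%R i)] `&` Y @^-1` [set c] by rewrite setIC.
  rewrite e1 e2 => h.
  rewrite -(fineK (fin_num_measure P _ (measurableI _ _ (measurableI _ _ mA mXB) mYc))).
  rewrite -(fineK (fin_num_measure P _ (measurableI _ _ mXB mYc))).
  by rewrite -!EFinM mulrC h.
have mp : measurable_fun setT (fun x : R => Num.max x 0).
  by apply: measurable_maxr => //; exact: measurable_cst.
have mn : measurable_fun setT (fun x : R => Num.max (- x) 0).
  by apply: measurable_maxr => //; try exact: measurableT_comp.
have pp : forall x : R, 0 <= Num.max x 0 by move=> x; rewrite le_max lexx orbT.
have pn : forall x : R, 0 <= Num.max (- x) 0 by move=> x; rewrite le_max lexx orbT.
have tp := transfer (mX i) mE1 mYc al0 b0 H mp pp.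
have tn := transfer (mX i) mE1 mYc al0 b0 H mn pn.
have ep : (fun om => (X om 0%R i)%:E)^\+%E = (fun om => (Num.max (X om 0%R i) 0)%:E).
  by apply/funext => om; rewrite funeposE EFin_max.
have en : (fun om => (X om 0%R i)%:E)^\-%E = (fun om => (Num.max (- X om 0%R i) 0)%:E).
  by apply/funext => om; rewrite funenegE EFin_max EFinN.
have intE E : measurable E -> P.-integrable E (fun om => (X om 0%R i)%:E).
  by move=> mE; exact: (integrableS measurableT mE (subsetT _) intX).
have finp E : measurable E ->
    (\int[P]_(x in E) (Num.max (X x 0%R i) 0)%:E)%E \is a fin_num.
  by move=> mE; rewrite -ep; apply: integrable_fin_num => //;
     exact: integrable_funepos (intE _ mE).
have finn E : measurable E ->
    (\int[P]_(x in E) (Num.max (- X x 0%R i) 0)%:E)%E \is a fin_num.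
  by move=> mE; rewrite -en; apply: integrable_fin_num => //;
     exact: integrable_funeneg (intE _ mE).
have h1 : fine (\int[P]_(om in Y @^-1` [set c]) (X om 0%R i)%:E)%E = 0.
  move: h0; rewrite /condE -/al => /eqP; rewrite mulf_eq0 invr_eq0 (gt_eqF al_gt0) orbF.
  by move/eqP.
have Ip E : (\int[P]_(x in E) ((fun om => (X om 0%R i)%:E)^\+ x) =
    \int[P]_(x in E) (Num.max (X x 0%R i) 0)%:E)%E.
  by apply: eq_integral => x _; rewrite funeposE EFin_max.
have In E : (\int[P]_(x in E) ((fun om => (X om 0%R i)%:E)^\- x) =
    \int[P]_(x in E) (Num.max (- X x 0%R i) 0)%:E)%E.
  by apply: eq_integral => x _; rewrite funenegE EFin_max EFinN.
rewrite integralE Ip In.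
move: h1; rewrite integralE Ip In => h1.
move: tp tn h1.
rewrite -(fineK (finp _ mE1)) -(fineK (finn _ mE1)) -(fineK (finp _ mYc)) -(fineK (finn _ mYc)).
rewrite -!EFinM -!EFinB /= => /eqP; rewrite eqe => /eqP e1 /eqP; rewrite eqe => /eqP e2 e3.
apply: (congr1 EFin); apply/eqP.
by rewrite -(inj_eq (mulfI (lt0r_neq0 al_gt0))) mulr0 mulrBr e1 e2 -mulrBr e3 mulr0.
Qed.

Lemma abs_le_sq (R : realType) (r : R) : `|r| <= 1 + r ^+ 2.
Proof.
by case: (ger0P r) => h; nra.
Qed.

Lemma intX1 d (T : measurableType d) (R : realType) (P : probability T R)
  (f : T -> R) (mf : measurable_fun setT f)
  (h2 : P.-integrable setT (fun om => (f om ^+ 2)%:E)) :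
  P.-integrable setT (fun om => (f om)%:E).
Proof.
apply: (@le_integrable _ _ _ _ _ measurableT _ (fun om => (1 + f om ^+ 2)%:E)).
- exact/measurable_EFinP.
- move=> x _; rewrite !abse_EFin lee_fin.
  exact: le_trans (abs_le_sq _) (ler_norm _).
- apply: (eq_integrable measurableT (fun om => (EFin \o cst 1) om + (f om ^+ 2)%:E)); last first.
    exact: integrableD (finite_measure_integrable_cst _ _ _) h2.
  by move=> x _; rewrite /= EFinD.
Qed.

Lemma hinge_ineq (R : realType) (u t : R) :
  Num.max 0 u - t * (if 0 < u then 1 else 0) <= Num.max 0 (u - t).
Proof.
case: ltP => h.
  by rewrite mulr1 le_max lexx orbT.
by rewrite mulr0 subr0 le_max lexx.
Qed.

Unset Implicit Arguments.

Theorem mainTheorem2 (d0 : measure_display) (T : measurableType d0)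
  (R : realType) (P : probability T R) (d : nat)
  (X : T -> 'rV[R]_d) (Y : T -> R)
  (mX : forall i : 'I_d, measurable_fun setT (fun om => X om 0 i))
  (mY : measurable_fun setT Y)
  (Ypm : forall om, Y om = 1 \/ Y om = -1)
  (X2 : forall i : 'I_d, P.-integrable setT (fun om => (X om 0 i ^+ 2)%:E))
  (lam : R) (lam_gt0 : 0 < lam)
  (wstar : 'rV[R]_d)
  (wstar_min : forall w : 'rV[R]_d,
     (svm_loss P X Y lam wstar <= svm_loss P X Y lam w)%E)
  (indep : forall c : R, (c = 1 \/ c = -1) -> cond_indep_coords P X Y c)
  (i : 'I_d)
  (hi : condE P Y (-1) (fun om => X om 0 i) = 0 /\
        condE P Y 1 (fun om => X om 0 i) = 0) :
  wstar 0 i = 0.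
Proof.
apply/eqP/negPn/negP => ai.
set a := wstar 0 i.
have Xint j : P.-integrable setT (fun om => (X om 0 j)%:E) := intX1 (mX j) (X2 j).
pose w' : 'rV[R]_d := \row_j (if j == i then 0 else wstar 0 j).
have w'E j : w' 0 j = if j == i then 0 else wstar 0 j by rewrite mxE.
have w'i : w' 0 i = 0 by rewrite w'E eqxx.
pose S om := \sum_(j < d) w' 0 j * X om 0 j.
have sumE om : \sum_(j < d) wstar 0 j * X om 0 j = S om + a * X om 0 i.
  rewrite /S (bigD1 i) //= [in RHS](bigD1 i) //= w'i mul0r add0r addrC.
  by congr (_ + _); apply: eq_bigr => j ji; rewrite w'E (negbTE ji).
have regE : \sum_(j < d) wstar 0 j ^+ 2 = \sum_(j < d) w' 0 j ^+ 2 + a ^+ 2.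
  rewrite (bigD1 i) //= [in RHS](bigD1 i) //= w'i (_ : (0:R) ^+ 2 = 0);
    last by rewrite expr2 mul0r.
  rewrite add0r addrC.
  by congr (_ + _); apply: eq_bigr => j ji; rewrite w'E (negbTE ji).
have mhinge (w : 'rV[R]_d) : measurable_fun setT (fun om => hinge w (X om) (Y om)).
  rewrite /hinge; apply: measurable_maxr => //.
  apply: measurable_funB => //; apply: measurable_funM => //.
  by apply: measurable_sum => j; apply: measurable_funM => //.
have hint (w : 'rV[R]_d) : P.-integrable setT (fun om => (hinge w (X om) (Y om))%:E).
  apply: (@le_integrable _ _ _ _ _ measurableT _
     (fun om => (1 + \sum_(j < d) `|w 0 j| * `|X om 0 j|)%:E)).
  - exact/measurable_EFinP.
  - move=> om _; rewrite !abse_EFin lee_fin.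
    apply: (le_trans _ (ler_norm _)).
    rewrite /hinge.
    have Yn : `|Y om| = 1 by case: (Ypm om) => ->; rewrite ?normrN normr1.
    apply: (@le_trans _ _ (1 + `|\sum_(j < d) w 0 j * X om 0 j|)).
      apply: (@le_trans _ _ `|1 - Y om * \sum_(j < d) w 0 j * X om 0 j|).
        by rewrite /Num.max; case: ifP => _; rewrite ?normr0 ?normr_ge0.
      by apply: (le_trans (ler_normB _ _)); rewrite normr1 normrM Yn mul1r.
    rewrite lerD2l; apply: (le_trans (ler_norm_sum _ _ _)).
    by apply: ler_sum => j _; rewrite normrM.
  - have i1 := @integrable_sum _ _ _ P _ measurableT _ (index_enum 'I_d) predT
      (fun j om => (`|w 0 j|%:E * `|(X om 0%R j)%:E|)%E)
      (fun j _ => integrableZl measurableT `|w 0 j| (integrable_abse (Xint j))).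
    have i2 := integrableD measurableT (finite_measure_integrable_cst P 1 measurableT) i1.
    apply: (eq_integrable measurableT _ _ _ i2) => om _.
    by rewrite /= EFinD -sumEFin; congr (_ + _)%E;
      apply: eq_bigr => j _; rewrite abse_EFin EFinM.
have mYc (c : R) : measurable (Y @^-1` [set c]).
  by have := mY measurableT _ (measurable_set1 c); rewrite setTI.
pose E1 := [set om | 0 < 1 - 1 * \sum_(j < d) w' 0 j * X om 0 j] `&` Y @^-1` [set 1].
pose E2 := [set om | 0 < 1 - (-1) * \sum_(j < d) w' 0 j * X om 0 j] `&` Y @^-1` [set -1].
have sG1 := @halfspace_sG _ _ _ _ X i w' 1 w'i.
have sG2 := @halfspace_sG _ _ _ _ X i w' (-1) w'i.
have mE1 : measurable E1 by apply: measurableI => //; exact: sG_meas sG1.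
have mE2 : measurable E2 by apply: measurableI => //; exact: sG_meas sG2.
have I1 := key_integral mX mY (indep 1 (or_introl erefl)) (Xint i) hi.2 sG1.
have I2 := key_integral mX mY (indep (-1) (or_intror erefl)) (Xint i) hi.1 sG2.
have n11 : (1 : R) != -1 by apply/eqP => h; lra.
have inE1 om : (om \in E1) = (0 < 1 - S om) && (Y om == 1).
  apply/idP/andP => [/set_mem [/= h /= ->]|[h /eqP Yo]].
    by rewrite mul1r in h; split.
  by apply/mem_set; split => //=; rewrite mul1r.
have inE2 om : (om \in E2) = (0 < 1 + S om) && (Y om == -1).
  apply/idP/andP => [/set_mem [/= h /= ->]|[h /eqP Yo]].
    by rewrite mulN1r opprK in h; split.
  by apply/mem_set; split => //=; rewrite mulN1r opprK.
pose g om := (if om \in E1 then X om 0 i else 0) - (if om \in E2 then X om 0 i else 0).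
have gE om : g om = Y om * X om 0 i * (if 0 < 1 - Y om * S om then 1 else 0).
  rewrite /g inE1 inE2; case: (Ypm om) => ->.
    rewrite eqxx (negbTE n11) andbT andbF !mul1r.
    by case: ifP => _; ring.
  rewrite eqxx eq_sym (negbTE n11) andbT andbF !mulN1r opprK.
  by case: ifP => _; ring.
have hle om : hinge w' (X om) (Y om) - a * g om <= hinge wstar (X om) (Y om).
  rewrite /hinge sumE gE.
  have e1 : a * (Y om * X om 0 i * (if 0 < 1 - Y om * S om then 1 else 0)) =
     (Y om * a * X om 0 i) * (if 0 < 1 - Y om * S om then 1 else 0) by ring.
  have e2 : 1 - Y om * (S om + a * X om 0 i) = (1 - Y om * S om) - Y om * a * X om 0 i.
    by ring.
  by rewrite e1 e2; exact: hinge_ineq.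
pose f := fun om => (X om 0%R i)%:E.
have gpatch : (fun om => (g om)%:E) = (fun om => (f \_ E1) om - (f \_ E2) om)%E.
  apply/funext => om; rewrite /g EFinB /patch /f.
  by case: ifP => _; case: ifP => _.
have pint E (mE : measurable E) : P.-integrable setT (f \_ E).
  exact: (integrable_mkcond _ mE).1 (integrableS measurableT mE (subsetT _) (Xint i)).
have gint : P.-integrable setT (fun om => (g om)%:E).
  by rewrite gpatch; exact: integrableB (pint _ mE1) (pint _ mE2).
have gI : (\int[P]_om (g om)%:E = 0)%E.
  rewrite gpatch (@integralB _ _ _ P setT measurableT _ _ (pint _ mE1) (pint _ mE2)).
  by rewrite -!integral_mkcond /f I1 I2 sube0.
have lei : (\int[P]_om ((hinge w' (X om) (Y om))%:E - a%:E * (g om)%:E) <=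
           \int[P]_om (hinge wstar (X om) (Y om))%:E)%E.
  apply: le_integral => //.
  - apply: integrableB => //; exact: integrableZl.
  - by move=> om _; rewrite -EFinM -EFinB lee_fin; exact: hle.
rewrite integralB // in lei; last exact: integrableZl.
rewrite (integralZl measurableT gint) gI mule0 sube0 in lei.
have := wstar_min w'; rewrite /svm_loss.
move: lei.
rewrite -(fineK (integrable_fin_num measurableT (hint wstar))).
rewrite -(fineK (integrable_fin_num measurableT (hint w'))).
rewrite -!EFinD !lee_fin regE => h1 h2.
have a2 : 0 < a ^+ 2.
  by rewrite lt_def sqr_ge0 andbT expf_eq0 negb_and ai orbT.
have l2 : 0 < lam / 2 * a ^+ 2 by rewrite mulr_gt0 // divr_gt0.
move: h1 h2 l2; rewrite mulrDr.
set u := fine _; set v := fine _.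
move=> h1 h2 l2; lra.
Qed.
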